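(* Let $\ell_N:\mathbb R^D\to\mathbb R$ be any measurable function, let $\mathcal C$ be a positive definite covariance matrix, and let $\mathcal P_N$ be the transition kernel of the pCN chain with prior covariance $\mathcal C$, log-likelihood $\ell_N$ and parameter $\beta\in(0,1]$ (defined in the context). (i) If $\mathcal C=I_D/D$ and $L,\eta>0$, then for all $\beta\le\min\{1/2,\eta/(4L),\eta^2/64\}$ and all $D\ge1$, \[\sup_{\theta\in B_L}\mathcal P_N\big(\theta,\{\vartheta:\|\theta-\vartheta\|_{\mathbb R^D}\ge\eta/2\}\big)\le e^{-D/2}.\] (ii) If $\mathcal C=\Sigma_\alpha$ and $L,\eta>0$, there exists $c>0$ such that for all $\beta\le\min\{1/2,\eta/(4L),c\eta^2/D\}$ and all $D\ge1$, \[\sup_{\theta\in B_L}\mathcal P_N\big(\theta,\{\vartheta:\|\theta-\vartheta\|_{\mathbb R^D}\ge\eta/2\}\big)\le e^{-D/2}.\]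
   Context: pCN: with $\xi$ distributed $\mathcal N(0,\mathcal C)$, from state $\vartheta$ propose $p=\sqrt{1-\beta}\,\vartheta+\sqrt\beta\,\xi$ and move to $p$ with probability $\min\{1,e^{\ell_N(p)-\ell_N(\vartheta)}\}$, otherwise stay at $\vartheta$. $B_L=\{\theta:\|\theta\|_{\mathbb R^D}\le L\}$. $\Sigma_\alpha$ ($\alpha>d/2$) is the covariance of the first $D$ coordinates of a centred Gaussian sequence in $\ell^2$ whose RKHS is the Sobolev space $H^\alpha$ of a bounded $d$-dimensional domain identified with sequence space via Parseval ($\alpha$-regular Whittle–Matérn-type prior). *)

(* Defs.v *)
(* R^D is modelled as D.-tuple R, with
   the library's product (Borel) sigma-algebra on tuples. *)
From HB Require Import structures.
From mathcomp Require Import all_boot all_order all_algebra.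
From mathcomp Require Import all_classical all_reals all_analysis.
Set Implicit Arguments. Unset Strict Implicit. Unset Printing Implicit Defensive.
Import Order.TTheory GRing.Theory Num.Theory.
Local Open Scope classical_set_scope.
Local Open Scope ring_scope.

Section pcn.
Variable R : realType.

Fixpoint leb_iter (n : nat) : (n.-tuple R -> \bar R) -> \bar R :=
  match n return (n.-tuple R -> \bar R) -> \bar R with
  | 0 => fun f => f [tuple]
  | m.+1 => fun f =>
      (\int[@lebesgue_measure R]_(x in [set: R])
          leb_iter (fun t : m.-tuple R => f [tuple of x :: t]))%E
  end.

Definition eucl_norm (D : nat) (x : D.-tuple R) : R :=
  Num.sqrt (\sum_(i < D) (tnth x i) ^+ 2).

Definition tsub (D : nat) (x y : D.-tuple R) : D.-tuple R :=
  [tuple tnth x i - tnth y i | i < D].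

Definition gauss_density (D : nat) (C : 'M[R]_D) (x : D.-tuple R) : R :=
  ((pi *+ 2) ^+ D * \det C) ^-1 `^ (2^-1) *
  expR (- (\sum_(i < D) \sum_(j < D) tnth x i * invmx C i j * tnth x j) / 2).

Definition gauss_int (D : nat) (C : 'M[R]_D) (g : D.-tuple R -> \bar R) : \bar R :=
  leb_iter (fun x => ((gauss_density C x)%:E * g x)%E).

Definition posdef (D : nat) (C : 'M[R]_D) : Prop :=
  C^T = C /\ forall v : 'rV[R]_D, v != 0 -> 0 < (v *m C *m v^T) 0 0.

Definition pcn_prop (D : nat) (beta : R) (theta xi : D.-tuple R) : D.-tuple R :=
  [tuple Num.sqrt (1 - beta) * tnth theta i + Num.sqrt beta * tnth xi i | i < D].

Definition pcn_acc (D : nat) (l : D.-tuple R -> R) (theta p : D.-tuple R) : R :=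
  Num.min 1 (expR (l p - l theta)).

Definition pcn_kernel (D : nat) (C : 'M[R]_D) (l : D.-tuple R -> R) (beta : R)
    (theta : D.-tuple R) (A : set (D.-tuple R)) : \bar R :=
  (gauss_int C (fun xi => (\1_A (pcn_prop beta theta xi)
                            * pcn_acc l theta (pcn_prop beta theta xi))%:E)
   + (\1_A theta)%:E *
     (1 - gauss_int C (fun xi => (pcn_acc l theta (pcn_prop beta theta xi))%:E)))%E.

(* Sigma_alpha: covariance of the first D coordinates of the alpha-regular
   (Whittle-Matern-type) Gaussian sequence prior, diag(k^(-2 alpha/d)). *)
Definition Sigma_alpha (d : nat) (alpha : R) (D : nat) : 'M[R]_D :=
  diag_mx (\row_(i < D) ((i.+1)%:R `^ (- (alpha *+ 2 / d%:R)))).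

End pcn.

(* Main.v *)
Require Import Defs.
From HB Require Import structures.
From mathcomp Require Import all_boot all_order all_algebra.
From mathcomp Require Import all_classical all_reals all_analysis.
From mathcomp Require Import normal_distribution measurable_realfun.
From mathcomp Require Import ring lra.
Import Order.TTheory GRing.Theory Num.Theory.
Local Open Scope classical_set_scope.
Local Open Scope ring_scope.

Section helpers.
Variable R : realType.
Local Notation mu := (@lebesgue_measure R).

Lemma int_mono (f g : R -> \bar R) : (forall x, (0 <= f x)%E) ->
  (forall x, (f x <= g x)%E) ->
  (\int[mu]_(x in [set: R]) f x <= \int[mu]_(x in [set: R]) g x)%E.
Proof.
move=> f0 fg; have g0 x : (0 <= g x)%E by apply: le_trans (fg x).
rewrite !ge0_integralTE //; apply: ereal_sup_le => _ [h hf <-].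
by exists h => //= x; apply: le_trans (hf x) (fg x).
Qed.

Lemma leb_iter_ge0 n (f : n.-tuple R -> \bar R) : (forall t, (0 <= f t)%E) ->
  (0 <= leb_iter f)%E.
Proof.
elim: n f => [|n IH] f f0 /=; first exact: f0.
by apply: integral_ge0 => x _; apply: IH => t; exact: f0.
Qed.

Lemma leb_iter_le n (f g : n.-tuple R -> \bar R) : (forall t, (0 <= f t)%E) ->
  (forall t, (f t <= g t)%E) -> (leb_iter f <= leb_iter g)%E.
Proof.
elim: n f g => [|n IH] f g f0 fg /=; first exact: fg.
apply: int_mono => [x|x]; first by apply: leb_iter_ge0 => t; exact: f0.
by apply: IH => t; [exact: f0|exact: fg].
Qed.

Lemma leb_iter_prod n (c : R) (g : 'I_n -> R -> R) (G : 'I_n -> R) :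
  0 <= c -> (forall i x, 0 <= g i x) -> (forall i, measurable_fun setT (g i)) -> (forall i, 0 <= G i) ->
  (forall i, \int[mu]_x (g i x)%:E = (G i)%:E)%E ->
  leb_iter (fun t : n.-tuple R => (c * \prod_i g i (tnth t i))%:E) = (c * \prod_i G i)%:E.
Proof.
elim: n c g G => [|n IH] c g G c0 g0 mg G0 Gi /=; first by rewrite !big_ord0.
transitivity (\int[mu]_(x in [set: R]) ((c * \prod_(i < n) G (lift ord0 i))%:E * (g ord0 x)%:E))%E.
  apply: eq_integral => x _.
  have -> : (fun t : n.-tuple R => (c * \prod_i g i (tnth [tuple of x :: t] i))%:E) =
     (fun t => ((c * g ord0 x) * \prod_(i < n) g (lift ord0 i) (tnth t i))%:E).
    apply: funext => t; rewrite big_ord_recl tnth0 mulrA; congr (_ * _)%:E.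
    by apply: eq_bigr => i _; rewrite tnthS.
  rewrite (IH _ (fun i => g (lift ord0 i)) (fun i => G (lift ord0 i))) //; first by rewrite -EFinM mulrAC.
  by rewrite mulr_ge0.
rewrite ge0_integralZl_EFin.
- by rewrite Gi -EFinM big_ord_recl mulrA mulrAC.
- done.
- by move=> x _; rewrite lee_fin g0.
- apply/measurable_EFinP; apply: mg.
- by rewrite mulr_ge0 // prodr_ge0.
Qed.

Lemma int_normal_fun (w : R) : 0 < w ->
  (\int[mu]_x (normal_fun 0 (Num.sqrt w) x)%:E)%E = ((normal_peak (Num.sqrt w))^-1)%:E.
Proof.
move=> w0; have s0 : Num.sqrt w != 0 by rewrite gt_eqF // sqrtr_gt0.
have p0 := normal_peak_gt0 s0.
have := integral_normal_pdf 0 (Num.sqrt w); rewrite normal_pdfE //=.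
under eq_integral do rewrite EFinM.
rewrite ge0_integralZl_EFin //; last 3 first.
- by move=> x _; rewrite lee_fin normal_fun_ge0.
- apply/measurable_EFinP; apply: measurable_normal_fun.
- exact: ltW.
have : (0 <= \int[mu]_x (normal_fun 0 (Num.sqrt w) x)%:E)%E.
  by apply: integral_ge0 => x _; rewrite lee_fin normal_fun_ge0.
case: (\int[mu]_x _)%E => [r| |] //= _.
- rewrite -EFinM => -[] h; congr EFin; move: h => /(congr1 (fun z => z / normal_peak (Num.sqrt w))); by rewrite [_ * r]mulrC mulfK ?gt_eqF // div1r.
- by rewrite gt0_muley // lte_fin.
Qed.

Lemma sqrt_prod n (f : 'I_n -> R) : (forall i, 0 <= f i) ->
  Num.sqrt (\prod_i f i) = \prod_i Num.sqrt (f i).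
Proof.
elim: n f => [|n IH] f f0; first by rewrite !big_ord0 sqrtr1.
rewrite !big_ord_recr /= sqrtrM; last by rewrite prodr_ge0.
by rewrite IH.
Qed.


Lemma sq_le_of_sqrt (x S : R) : 0 <= x -> 0 <= S -> x <= Num.sqrt S -> x ^+ 2 <= S.
Proof.
move=> x0 S0 h; rewrite -(sqr_sqrtr S0) expr2 [X in _ <= X]expr2.
by apply: ler_pM.
Qed.

Lemma geom D (theta xi : D.-tuple R) (beta L eta : R) : 0 < beta -> beta <= 1 ->
  0 < eta -> eucl_norm theta <= L -> beta * L <= eta / 4 ->
  eta / 2 <= eucl_norm (tsub theta (pcn_prop beta theta xi)) ->
  eta ^+ 2 / (16 * beta) <= \sum_(i < D) tnth xi i ^+ 2.
Proof.
move=> b0 b1 e0 hL hbL hd.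
set a := Num.sqrt (1 - beta).
have a0 : 0 <= a by apply: sqrtr_ge0.
have a2 : a ^+ 2 = 1 - beta by rewrite sqr_sqrtr // subr_ge0.
have bb : Num.sqrt beta ^+ 2 = beta by rewrite sqr_sqrtr // ltW.
have a1 : a <= 1 by nra.
have a3 : 1 - beta <= a by nra.
set St := \sum_(i < D) tnth theta i ^+ 2.
set Sx := \sum_(i < D) tnth xi i ^+ 2.
have St0 : 0 <= St by apply: sumr_ge0 => i _; apply: sqr_ge0.
have Sx0 : 0 <= Sx by apply: sumr_ge0 => i _; apply: sqr_ge0.
have L0 : 0 <= L by apply: le_trans hL; apply: sqrtr_ge0.
have hSt : St <= L ^+ 2.
  rewrite -(sqr_sqrtr St0) expr2 [L ^+ 2]expr2.
  by apply: ler_pM => //; apply: sqrtr_ge0.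
have hSd : (eta / 2) ^+ 2 <= 2 * (1 - a) ^+ 2 * St + 2 * beta * Sx.
  have e2 : 0 <= eta / 2 by rewrite divr_ge0 // ltW.
  have Sd0 : 0 <= \sum_(i < D) tnth (tsub theta (pcn_prop beta theta xi)) i ^+ 2.
    by apply: sumr_ge0 => i _; apply: sqr_ge0.
  have hd2 := sq_le_of_sqrt _ _ e2 Sd0 hd.
  apply: (le_trans hd2).
  rewrite /St /Sx !mulr_sumr -big_split /=; apply: ler_sum => i _.
  rewrite /tsub /pcn_prop !tnth_mktuple.
  set t := tnth theta i; set x := tnth xi i; set b := Num.sqrt beta.
  rewrite -/a -[X in _ <= _ + 2 * X * _]bb -/b.
  have := sqr_ge0 ((1 - a) * t + b * x).
  move=> hh; nra.
have h1a : (1 - a) ^+ 2 <= beta ^+ 2 by nra.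
have : 2 * (1 - a) ^+ 2 * St <= 2 * beta ^+ 2 * L ^+ 2.
  by apply: ler_pM; [nra|nra|nra|done].
move=> h2.
have bL0 : 0 <= beta * L by rewrite mulr_ge0 // ltW.
have h3 : (beta * L) ^+ 2 <= (eta / 4) ^+ 2 by nra.
rewrite ler_pdivrMr; last by nra.
nra.
Qed.


Lemma aux_ratio (w p dd : R) : 0 < p -> w <= 4 * dd -> w * p <= 4 * (p * dd).
Proof. by move=> p0 h; rewrite mulrCA mulrC ler_wpM2l // ltW. Qed.

Lemma aux_exp : expR (- (3 / 2)) * 2 <= expR (- (1 / 2)) :> R.
Proof.
have := expR_ge1Dx (1 : R); have := expR_gt0 (- (3 / 2) : R).
have -> : expR (- (1 / 2)) = expR 1 * expR (- (3 / 2)) :> R.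
  by rewrite -expRD; congr expR; lra.
move: (expR 1) (expR (- (3/2))) => a b; nra.
Qed.

Lemma aux_ratio2 (w p dd : R) : 0 < p -> 0 < dd -> 0 < w -> w <= 4 * dd ->
  0 <= Num.sqrt (w * p) / Num.sqrt (p * dd) <= 2.
Proof.
move=> p0 d0 w0 h.
have pd : 0 < p * dd by rewrite mulr_gt0.
rewrite divr_ge0 ?sqrtr_ge0 //= ler_pdivrMr ?sqrtr_gt0 //.
have -> : 2 * Num.sqrt (p * dd) = Num.sqrt (4 * (p * dd)).
  have -> : (4 : R) = 2 ^+ 2 by rewrite expr2; lra.
  by rewrite [RHS]sqrtrM ?sqr_ge0 // sqrtr_sqr ger0_norm.
rewrite ler_sqrt; last by rewrite mulr_ge0 // ltW.
exact: aux_ratio.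
Qed.

Lemma aux_term (x v s : R) : 0 < v -> 0 < 1 - 2 * s * v ->
  - x ^+ 2 / ((v^-1 - 2 * s)^-1 *+ 2) = - (x ^+ 2 / v) / 2 + s * x ^+ 2.
Proof.
move=> v0 h; field.
apply/andP; split; first by rewrite gt_eqF.
by rewrite gt_eqF //; lra.
Qed.

Lemma main_bound D (d : 'rV[R]_D) (s T beta L eta : R) (l : D.-tuple R -> R)
    (theta : D.-tuple R) :
  (forall i, 0 < d 0 i) -> 0 < s -> (forall i, 2 * s * d 0 i <= 3 / 4) ->
  3 / 2 * D%:R <= s * T ->
  0 < beta -> beta <= 1 -> 0 < eta -> beta * L <= eta / 4 ->
  T <= eta ^+ 2 / (16 * beta) -> eucl_norm theta <= L ->
  (pcn_kernel (diag_mx d) l beta theta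
     [set th | (eta / 2 <= eucl_norm (tsub theta th))%R]
   <= (expR (- (D%:R / 2)))%:E)%E.
Proof.
move=> v0 s0 sv sT b0 b1 e0 bL Tb hL.
set A := [set th | _].
have hA : \1_A theta = 0 :> R.
  have nA : ~ A theta.
    rewrite /A /= /eucl_norm big1 => [|i _]; last first.
      by rewrite /tsub tnth_mktuple subrr expr0n.
    rewrite sqrtr0 => h; have h2 : 0 < eta / 2 by rewrite divr_gt0.
    by move: h; rewrite leNgt h2.
  by rewrite indicE memNset.
rewrite /pcn_kernel hA mul0e adde0 /gauss_int.
pose w i := ((d 0 i)^-1 - 2 * s)^-1.
have q0 i : 1 / 4 <= 1 - 2 * s * d 0 i by have := sv i; lra.
have vi0 i : (d 0 i)^-1 - 2 * s = (1 - 2 * s * d 0 i) / d 0 i.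
  by field; rewrite gt_eqF.
have w0 i : 0 < w i by rewrite /w vi0 invr_gt0 divr_gt0 ?v0 //; have := q0 i; lra.
have wv i : w i <= 4 * d 0 i.
  rewrite /w vi0 invf_div ler_pdivrMr; last by have := q0 i; lra.
  by have := q0 i; have := v0 i; nra.
pose K := ((pi *+ 2) ^+ D * \det (diag_mx d)) ^-1 `^ 2^-1.
pose c := K * expR (- (s * T)).
pose g i y := normal_fun 0 (Num.sqrt (w i)) y.
pose G i := (normal_peak (Num.sqrt (w i)))^-1.
have K0 : 0 <= K by apply: powR_ge0.
apply: (le_trans (leb_iter_le _ _ (fun t : D.-tuple R => (c * \prod_i g i (tnth t i))%:E) _ _)).
- move=> t; rewrite -EFinM lee_fin; apply: mulr_ge0.
    by rewrite /gauss_density mulr_ge0 ?powR_ge0 ?expR_ge0.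
  apply: mulr_ge0; first by rewrite indicE ler0n.
  by rewrite /pcn_acc le_min ler01 expR_ge0.
- move=> t; rewrite -EFinM lee_fin.
  set p := pcn_prop beta theta t.
  set Sx := \sum_(i < D) tnth t i ^+ 2.
  have hI : \1_A p * pcn_acc l theta p <= expR (s * Sx - s * T).
    rewrite indicE; case: (boolP (p \in A)) => hp; last by rewrite mul0r expR_ge0.
    rewrite mul1r.
    have hS : T <= Sx.
      apply: (le_trans Tb); apply: (geom _ _ _ _ _ _ b0 b1 e0 hL bL); exact: (set_mem hp).
    have h0 : 0 <= s * Sx - s * T by rewrite subr_ge0 ler_wpM2l // ltW.
    apply: (@le_trans _ _ 1); first by rewrite /pcn_acc ge_min lexx.
    have := expR_ge1Dx (s * Sx - s * T); move: (expR _) => e; lra.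
  have dens0 : 0 <= gauss_density (diag_mx d) t.
    by rewrite /gauss_density mulr_ge0 ?powR_ge0 ?expR_ge0.
  apply: (le_trans (ler_wpM2l dens0 hI)).
  have uC : diag_mx d \in unitmx.
    by rewrite unitmxE det_diag unitfE gt_eqF // prodr_gt0.
  have invE : invmx (diag_mx d) = diag_mx (\row_i (d 0 i)^-1).
    have M : diag_mx d *m diag_mx (\row_i (d 0 i)^-1) = 1%:M.
      rewrite mulmx_diag -diag_const_mx; congr diag_mx; apply/rowP => j.
      by rewrite !mxE mulfV // gt_eqF.
    by rewrite -[LHS]mulmx1 -M mulmxA mulVmx // mul1mx.
  have QE : \sum_i \sum_j tnth t i * invmx (diag_mx d) i j * tnth t j =
      \sum_i tnth t i ^+ 2 * (d 0 i)^-1.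
    rewrite invE; apply: eq_bigr => i _; rewrite (bigD1 i) //= big1 => [|j ji].
      by rewrite !mxE eqxx mulr1n addr0 mulrAC -expr2.
    by rewrite !mxE eq_sym (negbTE ji) mulr0n mulr0 mul0r.
  rewrite /gauss_density QE -/K le_eqVlt; apply/orP; left; apply/eqP.
  rewrite /c /g -expR_sum -!mulrA -!expRD.
  congr (_ * expR _).
  have -> : \sum_i - (tnth t i - 0) ^+ 2 / (Num.sqrt (w i) ^+ 2 *+ 2) =
      \sum_i (- (tnth t i ^+ 2 / d 0 i) / 2 + s * tnth t i ^+ 2).
    apply: eq_bigr => i _; rewrite subr0 sqr_sqrtr; last exact: ltW.
    apply: aux_term; first exact: v0.
    by have := q0 i; lra.
  rewrite big_split /= -mulr_sumr -mulr_suml sumrN -/Sx; lra.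
rewrite (leb_iter_prod _ c g G); last first.
- by move=> i; rewrite int_normal_fun.
- by move=> i; rewrite /G invr_ge0 normal_peak_ge0.
- by move=> i; apply: measurable_normal_fun.
- by move=> i x; apply: normal_fun_ge0.
- by rewrite /c mulr_ge0 // expR_ge0.
rewrite lee_fin.
have pi0 : 0 < pi *+ 2 :> R by rewrite pmulrn_lgt0 // pi_gt0.
have S0 i : 0 <= pi *+ 2 * d 0 i by rewrite mulr_ge0 // ?ltW.
have XE : (pi *+ 2) ^+ D * \det (diag_mx d) = \prod_i (pi *+ 2 * d 0 i).
  by rewrite det_diag big_split /= prodr_const card_ord.
have KE : K = (\prod_i Num.sqrt (pi *+ 2 * d 0 i))^-1.
  rewrite /K XE powR12_sqrt ?invr_ge0 ?prodr_ge0 // sqrtrV ?prodr_ge0 //.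
  by rewrite sqrt_prod.
have GE i : G i = Num.sqrt (w i * (pi *+ 2)).
  by rewrite /G /normal_peak invrK sqr_sqrtr ?mulrnAr // ltW.
have ratio i : 0 <= G i / Num.sqrt (pi *+ 2 * d 0 i) <= 2.
  by rewrite GE; apply: aux_ratio2; [exact: pi0|exact: v0|exact: w0|exact: wv].
rewrite /c KE.
have -> : (\prod_i Num.sqrt (pi *+ 2 * d 0 i))^-1 * expR (- (s * T)) * \prod_i G i =
    expR (- (s * T)) * \prod_i (G i / Num.sqrt (pi *+ 2 * d 0 i)).
  by rewrite prodf_div mulrAC [RHS]mulrC [_^-1 * _]mulrC.
have hp : \prod_i (G i / Num.sqrt (pi *+ 2 * d 0 i)) <= \prod_(i < D) (2 : R).
  by apply: ler_prod => i _; exact: ratio i.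
apply: (le_trans (ler_wpM2l (expR_ge0 _) hp)).
rewrite prodr_const card_ord.
have hE : expR (- (s * T)) <= expR (- (3 / 2)) ^+ D.
  by rewrite -expRM_natr ler_expR; lra.
have h2 : expR (- (3 / 2)) * 2 <= expR (- (1 / 2)) :> R.
  exact: aux_exp.
have -> : - (D%:R / 2) = - (1 / 2) * D%:R :> R by lra.
rewrite expRM_natr.
apply: le_trans (ler_wpM2r (exprn_ge0 _ _) hE) _; first by [].
rewrite -exprMn; apply: lerXn2r => //; rewrite nnegrE ?mulr_ge0 ?expR_ge0 //.
Qed.

End helpers.

Theorem lemma4p9 (R : realType) :
  (* (i) C = I_D / D *)
  (forall L eta : R, 0 < L -> 0 < eta ->
    forall (beta : R) (D : nat),
      0 < beta -> beta <= 2^-1 -> beta <= eta / (L *+ 4) -> beta <= eta ^+ 2 / 64%:R ->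
      (1 <= D)%N ->
      forall l : D.-tuple R -> R, measurable_fun [set: D.-tuple R] l ->
      forall theta : D.-tuple R, eucl_norm theta <= L ->
        (pcn_kernel ((D%:R)^-1 *: 1%:M) l beta theta
           [set th | (eta / 2 <= eucl_norm (tsub theta th))%R]
         <= (expR (- (D%:R / 2)))%:E)%E)
  /\
  (* (ii) C = Sigma_alpha, alpha > d/2 *)
  (forall (d : nat) (alpha : R), (1 <= d)%N -> d%:R / 2 < alpha ->
   forall L eta : R, 0 < L -> 0 < eta ->
   exists c : R, 0 < c /\
    forall (beta : R) (D : nat),
      0 < beta -> beta <= 2^-1 -> beta <= eta / (L *+ 4) -> beta <= c * eta ^+ 2 / D%:R ->
      (1 <= D)%N ->
      forall l : D.-tuple R -> R, measurable_fun [set: D.-tuple R] l ->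
      forall theta : D.-tuple R, eucl_norm theta <= L ->
        (pcn_kernel (Sigma_alpha d alpha D) l beta theta
           [set th | (eta / 2 <= eucl_norm (tsub theta th))%R]
         <= (expR (- (D%:R / 2)))%:E)%E).
Proof.
split.
  move=> L eta L0 e0 beta D b0 bh bL be D1 l ml theta hL.
  have D0 : 0 < D%:R :> R by rewrite ltr0n.
  rewrite scalemx1 -diag_const_mx.
  have h4 : L *+ 4 = 4 * L by rewrite mulr_natl.
  rewrite h4 in bL.
  apply: (@main_bound R D (const_mx (D%:R^-1)) (3 * D%:R / 8) 4 beta L eta l theta) => //.
  - by move=> i; rewrite mxE invr_gt0.
  - by rewrite divr_gt0 // mulr_gt0.
  - move=> i; rewrite mxE le_eqVlt; apply/orP; left; apply/eqP.
    by field; rewrite gt_eqF.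
  - lra.
  - lra.
  - by move: bL; rewrite ler_pdivlMr ?mulr_gt0 //; lra.
  - rewrite ler_pdivlMr ?mulr_gt0 //.
    by move: be; rewrite ler_pdivlMr ?ltr0n //; lra.
move=> d alpha d1 ha L eta L0 e0.
exists (1 / 96); split; first lra.
move=> beta D b0 bh bL bc D1 l ml theta hL.
have D0 : 0 < D%:R :> R by rewrite ltr0n.
have h4 : L *+ 4 = 4 * L by rewrite mulr_natl.
rewrite h4 in bL.
have d0 : 0 < d%:R :> R by rewrite ltr0n.
have e_ge0 : 0 <= alpha *+ 2 / d%:R.
  rewrite divr_ge0 ?ler0n // mulrn_wge0 //.
  by apply: le_trans (ltW ha); rewrite divr_ge0 ?ler0n.
apply: (@main_bound R D (\row_(i < D) ((i.+1)%:R `^ (- (alpha *+ 2 / d%:R))))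
   (1 / 4) (6 * D%:R) beta L eta l theta) => //.
- by move=> i; rewrite mxE powR_gt0 // ltr0n.
- move=> i; rewrite mxE.
  have : (i.+1)%:R `^ (- (alpha *+ 2 / d%:R)) <= 1 :> R.
    have h1 : 1 <= (i.+1)%:R :> R by rewrite ler1n.
    have hle : - (alpha *+ 2 / d%:R) <= 0 by lra.
    by have := ler_powR h1 hle; rewrite powRr0.
  move: (_ `^ _) => x; lra.
- lra.
- lra.
- by move: bL; rewrite ler_pdivlMr ?mulr_gt0 //; lra.
- rewrite ler_pdivlMr ?mulr_gt0 //.
  move: bc; rewrite ler_pdivlMr //.
  have -> : 6 * D%:R * (16 * beta) = 96 * (beta * D%:R) :> R by ring.
  move: (beta * D%:R) => bD; lra.
Qed.
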